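(* Let $G$ be an odd unicyclic graph on $n$ vertices $1,2,\ldots,n$ with cycle $C$, let $Q$ be its signless Laplacian and $Q^{-1}=[q^+_{i,j}]$ its inverse. Then a vertex $i$ is in $C$ if and only if $q^+_{i,i}=\frac{|C|}{4}$.
   Context: A unicyclic graph on $n$ vertices is a simple connected graph with $n$ edges; it is odd if its unique cycle $C$ has odd length. The signless Laplacian is $Q=D+A$ ($A$ adjacency matrix, $D$ diagonal degree matrix); it is invertible for such graphs. $|C|$ is the number of vertices of $C$. *)

(* Defs.v *)
From mathcomp Require Import all_boot all_order all_algebra.
Set Implicit Arguments. Unset Strict Implicit. Unset Printing Implicit Defensive.
Import Order.TTheory GRing.Theory Num.Theory.

(* A simple graph on the vertex set 'I_n (vertices 0..n-1 stand for 1..n),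
   given by an adjacency relation e. *)
Definition simple_graph (n : nat) (e : rel 'I_n) : Prop :=
  symmetric e /\ irreflexive e.

Definition num_edges (n : nat) (e : rel 'I_n) : nat :=
  #|[set p : 'I_n * 'I_n | e p.1 p.2 && (p.1 < p.2)%N]|.

Definition connected_graph (n : nat) (e : rel 'I_n) : Prop :=
  forall i j : 'I_n, connect e i j.

Definition unicyclic (n : nat) (e : rel 'I_n) : Prop :=
  [/\ simple_graph e, connected_graph e & num_edges e = n].

Definition graph_cycle (n : nat) (e : rel 'I_n) (C : seq 'I_n) : bool :=
  [&& uniq C, (3 <= size C)%N & cycle e C].

Definition degree (n : nat) (e : rel 'I_n) (i : 'I_n) : nat :=
  #|[set j | e i j]|.

Local Open Scope ring_scope.
Definition signless_laplacian (R : nzRingType) (n : nat) (e : rel 'I_n)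
  : 'M[R]_n :=
  \matrix_(i, j) ((if i == j then (degree e i)%:R else 0) + (e i j)%:R).

(* Main.v *)
Require Import Defs.
From mathcomp Require Import all_boot all_order all_algebra.
From mathcomp Require Import zify ring lra.
Import Order.TTheory GRing.Theory Num.Theory.
Set Implicit Arguments. Unset Strict Implicit. Unset Printing Implicit Defensive.
Local Open Scope ring_scope.

Definition Eset n (e : rel 'I_n) : {set 'I_n * 'I_n} :=
  [set p : 'I_n * 'I_n | e p.1 p.2 && (p.1 < p.2)%N].
Definition es n (e : rel 'I_n) := enum (Eset e).
Definition Bm (R : nzRingType) n (e : rel 'I_n) (d0 : 'I_n * 'I_n) : 'M[R]_n :=
  \matrix_(v, t) (((nth d0 (es e) t).1 == v)%:R + ((nth d0 (es e) t).2 == v)%:R).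

Lemma size_es n (e : rel 'I_n) : size (es e) = num_edges e.
Proof. by rewrite /es -cardE. Qed.

Lemma sum_es (R : nzRingType) n (e : rel 'I_n) d0 (F : 'I_n * 'I_n -> R) :
  num_edges e = n ->
  \sum_(t < n) F (nth d0 (es e) t) = \sum_(p in Eset e) F p.
Proof.
move=> hn; rewrite -[RHS]big_enum (big_nth d0) -/(es e) size_es hn big_mkord.
by [].
Qed.

Lemma sum_Eset (R : nzRingType) n (e : rel 'I_n) (F : 'I_n * 'I_n -> R) :
  \sum_(p in Eset e) F p =
  \sum_a \sum_b (if e a b && (a < b)%N then F (a, b) else 0).
Proof.
rewrite big_mkcond pair_bigA /=; apply: eq_bigr => -[a b] _.
by rewrite inE.
Qed.

Lemma degreeE (R : nzRingType) n (e : rel 'I_n) u :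
  (degree e u)%:R = \sum_b (e u b)%:R :> R.
Proof.
rewrite /degree -sum1_card natr_sum big_mkcond /=; apply: eq_bigr => b _.
by rewrite inE; case: (e u b).
Qed.

Lemma QBBt (R : comNzRingType) n (e : rel 'I_n) d0 :
  simple_graph e -> num_edges e = n ->
  signless_laplacian R e = Bm R e d0 *m (Bm R e d0)^T.
Proof.
move=> [esym eirr] hn; apply/matrixP => u v; rewrite !mxE.
pose F (p : 'I_n * 'I_n) : R :=
  ((p.1 == u)%:R + (p.2 == u)%:R) * ((p.1 == v)%:R + (p.2 == v)%:R).
transitivity (\sum_(t < n) F (nth d0 (es e) t)); last first.
  by apply: eq_bigr => t _; rewrite !mxE.
rewrite sum_es // sum_Eset.
pose H (a b : 'I_n) : R := (a == u)%:R * ((a == v)%:R + (b == v)%:R).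
transitivity (\sum_a \sum_b (if e a b && (a < b)%N then H a b else 0) +
              \sum_a \sum_b (if e a b && (a < b)%N then H b a else 0)); last first.
  rewrite -big_split; apply: eq_bigr => a _; rewrite -big_split.
  apply: eq_bigr => b _ /=; case: ifP => _; last by rewrite addr0.
  by rewrite /F /H /=; ring.
have -> : \sum_a \sum_b (if e a b && (a < b)%N then H b a else 0) =
          \sum_a \sum_b (if e a b && (b < a)%N then H a b else 0).
  rewrite exchange_big; apply: eq_bigr => a _; apply: eq_bigr => b _.
  by rewrite (esym a b).
rewrite -big_split; under eq_bigr => a _ do rewrite -big_split.
have -> : \sum_a \sum_b ((if e a b && (a < b)%N then H a b else 0) +
                         (if e a b && (b < a)%N then H a b else 0)) =
          \sum_a \sum_b (if e a b then H a b else 0).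
  apply: eq_bigr => a _; apply: eq_bigr => b _.
  case eab: (e a b) => /=; last by rewrite addr0.
  have : a != b by apply: contraTneq eab => ->; rewrite eirr.
  rewrite -val_eqE /=; case: ltngtP => //= _ _; [by rewrite addr0|by rewrite add0r].
rewrite (bigD1 u) //= [X in _ = _ + X]big1 ?addr0; last first.
  move=> a /negbTE au; apply: big1 => b _; rewrite /H au mul0r.
  by case: ifP.
under eq_bigr => b _ do rewrite /H eqxx mul1r.
transitivity (\sum_b (if e u b then (u == v)%:R else 0 : R) +
              \sum_b (if e u b then (b == v)%:R else 0 : R)); last first.
  by rewrite -big_split; apply: eq_bigr => b _ /=; case: ifP; rewrite ?addr0.
congr (_ + _).
  rewrite degreeE; case: eqP => _.
    by apply: eq_bigr => b _; case: (e u b).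
  by rewrite big1 // => b _; case: (e u b).
rewrite (bigD1 v) //= big1 ?addr0; last first.
  by move=> b /negbTE ->; case: ifP.
by rewrite eqxx; case: (e u v).
Qed.

Lemma cyc_edge_lt (T : eqType) (e : rel T) (C : seq T) x j :
  cycle e C -> (j < size C)%N ->
  e (nth x C j) (nth x C (j.+1 %% size C)).
Proof.
case: C => [//|c r] /= /(pathP x) h hj.
have [hj1|hj1] := ltnP j.+1 (size r).+1.
  rewrite modn_small //.
  have := h j; rewrite size_rcons => /(_ hj).
  rewrite /= nth_rcons.
  have hjr : (j < size r)%N by [].
  rewrite hjr; case: j hj hj1 hjr => [|j] //= _ _ hjr.
  by rewrite nth_rcons ltnW.
have ej : j = size r by apply/eqP; rewrite eqn_leq -ltnS hj -ltnS hj1.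
subst j; rewrite modnn /=.
have := h (size r); rewrite size_rcons ltnSn => /(_ isT).
rewrite nth_rcons ltnn eqxx.
case: r h {hj hj1} => [|a r] h //=.
by rewrite -rcons_cons nth_rcons /= ltnSn.
Qed.

Lemma cyc_edge (T : eqType) (e : rel T) (C : seq T) x m :
  cycle e C -> (0 < size C)%N ->
  e (nth x C (m %% size C)) (nth x C (m.+1 %% size C)).
Proof.
move=> hc hs; have := cyc_edge_lt x (j := m %% size C) hc (ltn_pmod _ hs).
by rewrite -addn1 modnDml addn1.
Qed.

Lemma zero_of_edges (R : realFieldType) n (e : rel 'I_n) (C : seq 'I_n)
    (y : 'I_n -> R) :
  simple_graph e -> connected_graph e -> graph_cycle e C -> odd (size C) ->
  (forall a b, e a b -> y a + y b = 0) -> forall v, y v = 0.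
Proof.
move=> [esym _] hconn /and3P[_ hs hc] hodd hy v.
have hs0 : (0 < size C)%N by apply: leq_trans hs.
pose cy m := nth v C (m %% size C).
have step m : y (cy m.+1) = - y (cy m).
  by apply/eqP; rewrite -addr_eq0 addrC; apply/eqP; apply: hy; exact: cyc_edge.
have alt m : y (cy m) = (-1) ^+ m * y (cy 0).
  elim: m => [|m IH]; first by rewrite expr0 mul1r.
  by rewrite step IH exprS mulN1r mulNr.
have h0 : y (cy 0) = 0.
  have : y (cy (size C)) = y (cy 0) by rewrite /cy modnn mod0n.
  rewrite alt -signr_odd hodd expr1 => h; lra.
have cl : closed e [pred w | y w == 0].
  move=> a b eab; rewrite !inE; have := hy a b eab => hab.
  have -> : y b = - y a by apply/eqP; rewrite -addr_eq0 addrC hab.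
  by rewrite oppr_eq0.
have := closed_connect cl (hconn (cy 0) v); rewrite !inE h0 eqxx.
by move=> h; apply/eqP; rewrite -h.
Qed.

Definition kp n (a b : 'I_n) : 'I_n * 'I_n := if (a < b)%N then (a, b) else (b, a).

Lemma kp_in n (e : rel 'I_n) a b : simple_graph e -> e a b -> kp a b \in Eset e.
Proof.
move=> [esym eirr] eab; rewrite /kp inE.
have : a != b by apply: contraTneq eab => ->; rewrite eirr.
rewrite -val_eqE /=; case: ltngtP => //= h _; first by rewrite eab.
by rewrite esym eab.
Qed.

Lemma kp_es n (e : rel 'I_n) d0 a b : simple_graph e -> num_edges e = n ->
  e a b -> exists t : 'I_n, nth d0 (es e) t = kp a b.
Proof.
move=> hs hn eab.
have hin : kp a b \in es e by rewrite /es mem_enum; exact: kp_in.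
have ht : (index (kp a b) (es e) < n)%N.
  by have := hin; rewrite -index_mem size_es hn.
by exists (Ordinal ht); rewrite /= nth_index.
Qed.

Lemma kp_sum (R : nzRingType) n (y : 'I_n -> R) a b :
  y (kp a b).1 + y (kp a b).2 = y a + y b.
Proof. by rewrite /kp; case: ifP => //= _; rewrite addrC. Qed.

Lemma kp_eqv n (a b v : 'I_n) :
  (((kp a b).1 == v) + ((kp a b).2 == v) = (a == v) + (b == v))%N.
Proof. by rewrite /kp; case: ifP => //= _; rewrite addnC. Qed.

Lemma sum_pair (R : nzRingType) n (y : 'I_n -> R) (p : 'I_n * 'I_n) :
  \sum_v y v * ((p.1 == v)%:R + (p.2 == v)%:R) = y p.1 + y p.2.
Proof.
rewrite (eq_bigr (fun v => y v * (p.1 == v)%:R + y v * (p.2 == v)%:R));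
  last by move=> v _; rewrite mulrDr.
rewrite big_split /=; congr (_ + _).
  rewrite (bigD1 p.1) //= eqxx mulr1 big1 ?addr0 // => v hv.
  by rewrite eq_sym (negbTE hv) mulr0.
rewrite (bigD1 p.2) //= eqxx mulr1 big1 ?addr0 // => v hv.
by rewrite eq_sym (negbTE hv) mulr0.
Qed.

Lemma Bunit (R : realFieldType) n (e : rel 'I_n) (C : seq 'I_n) d0 :
  unicyclic e -> graph_cycle e C -> odd (size C) ->
  Bm R e d0 \in unitmx.
Proof.
move=> [hsimp hconn hn] hC hodd.
rewrite -row_free_unit -kermx_eq0; apply/eqP/row_matrixP => r; rewrite row0.
set y := row r _.
have hy : y *m Bm R e d0 = 0 by apply/sub_kermxP; exact: row_sub.
clearbody y.
apply/rowP => v; rewrite [RHS]mxE.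
apply: (zero_of_edges (y := fun w => y 0 w) hsimp hconn hC hodd) => a b eab.
have [t ht] := kp_es d0 hsimp hn eab.
have := congr1 (fun M : 'rV[R]_n => M 0 t) hy; rewrite !mxE.
under eq_bigr => w _ do rewrite mxE ht.
by rewrite (sum_pair (fun w => y 0 w)) kp_sum.
Qed.

Definition keyL (R : Type) n (x : 'I_n * 'I_n * R) := kp x.1.1 x.1.2.

Definition f0 (R : nzRingType) n (e : rel 'I_n) d0 (L : seq ('I_n * 'I_n * R))
  : 'cV[R]_n :=
  \col_t \sum_(x <- L) ((nth d0 (es e) t == keyL x)%:R * x.2).

Lemma sum_es_key (R : nzRingType) n (e : rel 'I_n) d0 (G : 'I_n * 'I_n -> R) k :
  num_edges e = n -> k \in Eset e ->
  \sum_(t < n) (nth d0 (es e) t == k)%:R * G (nth d0 (es e) t) = G k.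
Proof.
move=> hn hk.
rewrite (sum_es d0 (fun p => (p == k)%:R * G p)) //.
rewrite (bigD1 k) //= eqxx mul1r big1 ?addr0 // => p /andP[_ hp].
by rewrite (negbTE hp) mul0r.
Qed.

Lemma Bf0E (R : comNzRingType) n (e : rel 'I_n) d0 L v :
  simple_graph e -> num_edges e = n ->
  (forall x, x \in L -> e x.1.1 x.1.2) ->
  (Bm R e d0 *m f0 e d0 L) v 0 =
  \sum_(x <- L) x.2 * ((x.1.1 == v)%:R + (x.1.2 == v)%:R).
Proof.
move=> hs hn hL; rewrite !mxE.
under eq_bigr => t _ do rewrite !mxE big_distrr /=.
rewrite exchange_big /=; apply: eq_big_seq => x hx.
have hk := kp_in hs (hL x hx).
have := sum_es_key d0 (fun p => ((p.1 == v)%:R + (p.2 == v)%:R) * x.2) hn hk.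
rewrite /= -natrD kp_eqv natrD mulrC => <-.
by apply: eq_bigr => t _; rewrite /keyL; ring.
Qed.

Lemma sq_uniq (R : comNzRingType) n (L : seq ('I_n * 'I_n * R)) p :
  uniq (map (@keyL R n) L) ->
  (\sum_(x <- L) (p == keyL x)%:R * x.2) ^+ 2 =
  \sum_(x <- L) (p == keyL x)%:R * x.2 ^+ 2.
Proof.
elim: L => [|x L IH]; first by rewrite !big_nil expr0n.
rewrite /= => /andP[hx hu]; rewrite !big_cons.
case: eqP => [->|_]; last by rewrite !mul0r !add0r IH.
have z (f : 'I_n * 'I_n * R -> R) :
    \sum_(y <- L) (keyL x == keyL y)%:R * f y = 0.
  rewrite big_seq_cond big1 // => y /andP[hy _]; case: eqP => hk; last by rewrite mul0r.
  by case/negP: hx; rewrite hk; apply: map_f.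
rewrite (z (fun y => y.2)) (z (fun y => y.2 ^+ 2)).
by rewrite mul1r !addr0 mul1r.
Qed.

Lemma normf0 (R : comNzRingType) n (e : rel 'I_n) d0 (L : seq ('I_n * 'I_n * R)) :
  simple_graph e -> num_edges e = n ->
  (forall x, x \in L -> e x.1.1 x.1.2) -> uniq (map (@keyL R n) L) ->
  \sum_t (f0 e d0 L t 0) ^+ 2 = \sum_(x <- L) x.2 ^+ 2.
Proof.
move=> hs hn hL hu.
under eq_bigr => t _ do rewrite mxE sq_uniq //.
rewrite exchange_big /=; apply: eq_big_seq => x hx.
exact: (sum_es_key d0 (fun _ => x.2 ^+ 2) hn (kp_in hs (hL x hx))).
Qed.

Lemma entry_delta (R : nzRingType) n (A : 'M[R]_n) (i : 'I_n) :
  (((delta_mx i (@ord0 0) : 'cV[R]_n)^T *m A *m delta_mx i (@ord0 0)) (@ord0 0) (@ord0 0)) = A i i.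
Proof. by rewrite trmx_delta -rowE -colE !mxE. Qed.

Lemma qii_f0 (R : realFieldType) n (e : rel 'I_n) (C : seq 'I_n) d0 L (i : 'I_n) :
  unicyclic e -> graph_cycle e C -> odd (size C) ->
  (forall v, (Bm R e d0 *m f0 e d0 L) v 0 = (v == i)%:R) ->
  invmx (signless_laplacian R e) i i = \sum_t (f0 e d0 L t 0) ^+ 2.
Proof.
move=> hu hC hodd hv.
have Bu := @Bunit R n e C d0 hu hC hodd.
have [hs _ hn] := hu.
have QE := @QBBt R n e d0 hs hn.
set B := Bm R e d0 in Bu QE hv *.
set F := f0 e d0 L in hv *.
set Q := signless_laplacian R e in QE *.
have hF : B *m F = delta_mx i 0.
  by apply/matrixP => v j; rewrite ord1 hv mxE eqxx andbT.
have Qu : Q \in unitmx by rewrite QE unitmx_mul Bu unitmx_tr Bu.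
have M1 : B^T *m invmx Q *m B = 1%:M.
  rewrite -[LHS](mulKmx Bu) [B *m _]mulmxA [B *m _]mulmxA -QE mulmxV // mul1mx.
  exact: mulVmx.
rewrite -entry_delta -hF trmx_mul -!mulmxA (mulmxA B^T) (mulmxA (B^T *m _)) M1 mul1mx.
by rewrite !mxE; apply: eq_bigr => t _; rewrite !mxE expr2.
Qed.

Lemma tele (R : pzRingType) (g : nat -> R) d :
  \sum_(0 <= j < d) (-1) ^+ j * (g j + g j.+1) = g 0%N - (-1) ^+ d * g d.
Proof.
elim: d => [|d IH]; first by rewrite big_nil expr0 mul1r subrr.
rewrite big_nat_recr //= IH exprS mulN1r mulNr.
by rewrite mulrDr addrA addrNK opprK.
Qed.

Lemma kp_eq n (a b c d : 'I_n) : kp a b = kp c d ->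
  (a = c /\ b = d) \/ (a = d /\ b = c).
Proof.
rewrite /kp; case: ifP => _; case: ifP => _ [-> ->]; tauto.
Qed.

Lemma modk_small a k : (a <= k)%N -> (a %% k = if a == k then 0 else a)%N.
Proof.
move=> hak; case: eqP => [->|hne]; first by rewrite modnn.
by rewrite modn_small // ltn_neqAle hak andbT; apply/eqP.
Qed.

Lemma qii_path (R : realFieldType) n (e : rel 'I_n) (C : seq 'I_n) (i : 'I_n)
    (P : seq 'I_n) :
  unicyclic e -> graph_cycle e C -> odd (size C) ->
  path e i P -> uniq (i :: P) -> last i P \in C ->
  (forall j, (j < size P)%N -> nth i (i :: P) j \notin C) ->
  invmx (signless_laplacian R e) i i = (size P)%:R + (size C)%:R / 4%:R.
Proof.
move=> hu hC hodd hp hup hlast hnot.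
have [hs hconn hn] := hu.
have /and3P[huC hk3 hcyc] := hC.
set d := size P in hnot *; set k := size C in hodd *.
have hk0 : (0 < k)%N by apply: leq_trans hk3.
set h := index (last i P) C.
have hh : (h < k)%N by rewrite index_mem.
pose pp j := nth i (i :: P) j.
pose cy j := nth i C ((j + h) %% k).
pose c : R := (-1) ^+ d / 2%:R.
pose L := [seq (pp j, pp j.+1, (-1) ^+ j : R) | j <- iota 0 d] ++
          [seq (cy j, cy j.+1, c * (-1) ^+ j) | j <- iota 0 k].
have ppd : pp d = last i P by rewrite /pp; have := nth_last i (i :: P).
have cy0 : cy 0%N = last i P by rewrite /cy add0n modn_small // nth_index.
have cyk : cy k = cy 0%N by rewrite /cy add0n modnDl.
have cyC j : cy j \in C by rewrite /cy mem_nth // ltn_pmod.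
have ecy j : e (cy j) (cy j.+1) by rewrite /cy addSn; exact: cyc_edge.
have epp j : (j < d)%N -> e (pp j) (pp j.+1) by move/(pathP i): hp => H; apply: H.
have hL x : x \in L -> e x.1.1 x.1.2.
  rewrite mem_cat => /orP[] /mapP[j hj ->] /=; last exact: ecy.
  by apply: epp; rewrite mem_iota in hj.
have io m : iota 0 m = index_iota 0 m by rewrite /index_iota subn0.
have hB v : (Bm R e (i, i) *m f0 e (i, i) L) v 0 = (v == i)%:R.
  rewrite Bf0E // big_cat !big_map /= !io.
  under [X in _ + X]eq_bigr => j _ do rewrite -mulrA.
  rewrite -big_distrr /= !tele cyk cy0 ppd -(signr_odd _ k) hodd expr1 /c /pp /=.
  by rewrite eq_sym; field.
have hU : uniq (map (@keyL R n) L).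
  have ppinj a b : (a < d.+1)%N -> (b < d.+1)%N -> pp a = pp b -> a = b.
    by move=> ha hb /eqP; rewrite /pp nth_uniq // => /eqP.
  have cyeq a b : cy a = cy b -> (a %% k = b %% k)%N.
    move=> /eqP; rewrite /cy nth_uniq ?ltn_pmod // => /eqP H.
    by apply/eqP; rewrite -(eqn_modDr h) H.
  rewrite map_cat cat_uniq -!map_comp; apply/and3P; split.
  - rewrite map_inj_in_uniq ?iota_uniq // => j l; rewrite !mem_iota /= => hj hl.
    rewrite /keyL /= => /kp_eq [[h1 h2]|[h1 h2]]; first by apply: (ppinj j l) => //; lia.
    move: (ppinj j l.+1 ltac:(lia) ltac:(lia) h1) (ppinj j.+1 l ltac:(lia) ltac:(lia) h2); lia.
  - apply/hasPn => x /mapP[j hj ->] /=; apply/negP => /mapP[l hl].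
    rewrite mem_iota /= in hl; have := hnot l hl.
    rewrite /keyL /= => hl' /kp_eq [[h1 _]|[_ h1]].
      by move: hl'; rewrite -/(pp l) -h1 cyC.
    by move: hl'; rewrite -/(pp l) -h1 cyC.
  - rewrite map_inj_in_uniq ?iota_uniq // => j l; rewrite !mem_iota /= => hj hl.
    rewrite /keyL /= => /kp_eq [[/cyeq h1 _]|[/cyeq h1 /cyeq h2]].
      by move: h1; rewrite !modn_small.
    move: h1 h2; rewrite !modk_small; try lia.
    by do 4 (case: eqP => ?); lia.
rewrite (qii_f0 hu hC hodd hB) (normf0 (i, i) hs hn hL hU) big_cat !big_map /= !io.
under eq_bigr => j _ do rewrite sqrr_sign.
under [X in _ + X]eq_bigr => j _ do rewrite exprMn sqrr_sign mulr1.
rewrite !sumr_const_nat !subn0 /c exprMn sqrr_sign -mulr_natl.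
by field.
Qed.

Lemma path_to_cycle n (e : rel 'I_n) (C : seq 'I_n) (i : 'I_n) :
  connected_graph e -> (0 < size C)%N -> i \notin C ->
  exists P : seq 'I_n, [/\ path e i P, uniq (i :: P), last i P \in C,
    (forall j, (j < size P)%N -> nth i (i :: P) j \notin C) & (0 < size P)%N].
Proof.
move=> hconn hC0 hi.
have hc : nth i C 0%N \in C by rewrite mem_nth.
have /connectP [p hp hlast] := hconn i (nth i C 0%N).
move: hc; rewrite hlast.
case: (shortenP hp) => p' hp' hu _ hl.
pose m := find (mem C) (i :: p').
have hhas : has (mem C) (i :: p') by apply/hasP; exists (last i p') => //; exact: mem_last.
have hm : (m < (size p').+1)%N by rewrite -has_find.
have hmC : nth i (i :: p') m \in C by exact: (nth_find i hhas).
have hm0 : m != 0%N by apply: contraNneq hi => h0; rewrite h0 in hmC.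
exists (take m p'); split.
- exact: take_path.
- have -> : i :: take m p' = take m.+1 (i :: p') by [].
  exact: take_uniq hu.
- rewrite -nth_last /= (size_takel hm).
  case: m hm hmC hm0 {hhas} => [//|m'] /= hm hmC _.
  by rewrite nth_take.
- move=> j; rewrite (size_takel hm) => hj.
  have -> : i :: take m p' = take m.+1 (i :: p') by [].
  rewrite (@nth_take m.+1 _ i j (ltnW hj)).
  by apply/negbT; exact: (before_find i hj).
- by rewrite (size_takel hm) lt0n.
Qed.

Theorem mainTheorem13 (R : realFieldType) (n : nat) (e : rel 'I_n)
    (C : seq 'I_n) :
  unicyclic e -> graph_cycle e C -> odd (size C) ->
  forall i : 'I_n,
    i \in C <-> invmx (signless_laplacian R e) i i = (size C)%:R / 4%:R.
Proof.
move=> hu hC hodd i; split => [hi|].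
  rewrite (@qii_path R n e C i [::] hu hC hodd) //= ?add0r //.
move=> hq; apply/idPn => hi.
have [hs hconn hn] := hu.
have /and3P[_ hk3 _] := hC.
have [P [hp hup hl hnot hP0]] := path_to_cycle hconn (@leq_trans 3 1 (size C) isT hk3) hi.
move: hq; rewrite (qii_path R hu hC hodd hp hup hl hnot) => /eqP.
rewrite -subr_eq0 addrK pnatr_eq0 => /eqP hP; move: hP0; rewrite hP.
by [].
Qed.
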